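(* Let $S$ be a multiplicative subset of $R$ and $M=R_S$, regarded as an $R$-module. The following are equivalent: (i) $M$ is prime as an $R$-module; (ii) $\mathrm{Ann}_R(M)$ is a prime ideal of $R$; (iii) $R_S$ is an integral domain; (iv) there exists $\mathfrak p\in\mathrm{Spec}(R)$ with $M\ne 0$ and a monomorphism of $R$-modules $M\hookrightarrow\kappa(\mathfrak p)=R_{\mathfrak p}/\mathfrak pR_{\mathfrak p}$.
   Context: $R$ is a commutative Noetherian local ring. A module $M\neq0$ is prime if every $r\in R$ acts on $M$ either as zero or injectively. *)

(* Defs.v *)
(* Localizations are represented setoid-style: an element of
   a localization D^{-1}R is a pair (numerator, denominator) in R * R whose
   denominator lies in D, and equality of fractions is the usual relation. *)
From mathcomp Require Import all_boot all_order all_algebra.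
Set Implicit Arguments. Unset Strict Implicit. Unset Printing Implicit Defensive.
Import GRing.Theory.
Local Open Scope ring_scope.

Section Defs.
Variable R : comNzRingType.

Definition is_ideal (I : R -> Prop) : Prop :=
  I 0 /\ (forall a b, I a -> I b -> I (a + b)) /\ (forall r a, I a -> I (r * a)).

Definition prime_ideal (I : R -> Prop) : Prop :=
  is_ideal I /\ ~ I 1 /\ (forall a b, I (a * b) -> I a \/ I b).

Definition maximal_ideal (m : R -> Prop) : Prop :=
  is_ideal m /\ ~ m 1 /\
  (forall J : R -> Prop, is_ideal J -> ~ J 1 -> (forall x, m x -> J x) ->
     forall x, J x -> m x).

Definition noetherian_ring : Prop :=
  forall I : nat -> R -> Prop, (forall n, is_ideal (I n)) ->
    (forall n x, I n x -> I n.+1 x) ->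
    exists N, forall n x, (N <= n)%N -> I n x -> I N x.

Definition local_ring : Prop :=
  exists m, maximal_ideal m /\
    forall m', maximal_ideal m' -> forall x, m' x <-> m x.

Definition multiplicative (S : R -> Prop) : Prop :=
  S 1 /\ (forall a b, S a -> S b -> S (a * b)).

Definition isfrac (D : R -> Prop) (x : R * R) : Prop := D x.2.
Definition frac_eq (D : R -> Prop) (x y : R * R) : Prop :=
  exists t, D t /\ t * (x.1 * y.2 - y.1 * x.2) = 0.
Definition frac0 : R * R := (0, 1).
Definition frac1 : R * R := (1, 1).
Definition frac_add (x y : R * R) : R * R := (x.1 * y.2 + y.1 * x.2, x.2 * y.2).
Definition frac_opp (x : R * R) : R * R := (- x.1, x.2).
Definition frac_mul (x y : R * R) : R * R := (x.1 * y.1, x.2 * y.2).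
Definition frac_scale (a : R) (x : R * R) : R * R := (a * x.1, x.2).

Definition locM_nonzero (S : R -> Prop) : Prop :=
  exists x, isfrac S x /\ ~ frac_eq S x frac0.

Definition locM_prime (S : R -> Prop) : Prop :=
  locM_nonzero S /\
  forall r : R,
    (forall x, isfrac S x -> frac_eq S (frac_scale r x) frac0) \/
    (forall x y, isfrac S x -> isfrac S y ->
       frac_eq S (frac_scale r x) (frac_scale r y) -> frac_eq S x y).

Definition locM_ann (S : R -> Prop) (r : R) : Prop :=
  forall x, isfrac S x -> frac_eq S (frac_scale r x) frac0.

Definition loc_idomain (S : R -> Prop) : Prop :=
  ~ frac_eq S frac1 frac0 /\
  forall x y, isfrac S x -> isfrac S y ->
    frac_eq S (frac_mul x y) frac0 -> frac_eq S x frac0 \/ frac_eq S y frac0.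

Definition compl (p : R -> Prop) (s : R) : Prop := ~ p s.

Definition pRp (p : R -> Prop) (z : R * R) : Prop :=
  exists a t, p a /\ ~ p t /\ frac_eq (compl p) z (a, t).

Definition kappa_eq (p : R -> Prop) (x y : R * R) : Prop :=
  pRp p (frac_add x (frac_opp y)).

(* f is (a representative-level description of) an R-module monomorphism
   R_S -> kappa(p). *)
Definition loc_mono_to_kappa (S p : R -> Prop) (f : R * R -> R * R) : Prop :=
  (forall x, isfrac S x -> isfrac (compl p) (f x)) /\
  (forall x y, isfrac S x -> isfrac S y -> frac_eq S x y -> kappa_eq p (f x) (f y)) /\
  (forall x y, isfrac S x -> isfrac S y ->
     kappa_eq p (f (frac_add x y)) (frac_add (f x) (f y))) /\
  (forall r x, isfrac S x -> kappa_eq p (f (frac_scale r x)) (frac_scale r (f x))) /\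
  (forall x y, isfrac S x -> isfrac S y -> kappa_eq p (f x) (f y) -> frac_eq S x y).

End Defs.

(* Main.v *)
Require Import Defs.
From mathcomp Require Import all_boot all_order all_algebra.
From mathcomp Require Import ring.
From Stdlib Require Import Classical.
Local Open Scope ring_scope.
Set Implicit Arguments. Unset Strict Implicit.

Module Helpers.
Import GRing.Theory.
Section Aux.
Variable R : comNzRingType.
Implicit Types (p S : R -> Prop) (a b c : R).

Lemma pI p a c b : prime_ideal p -> p a -> b = c * a -> p b.
Proof. by move=> [[_ [_ H]] _] pa ->; apply: H. Qed.
Arguments pI {p a} c {b}.

Lemma pD p a b c : prime_ideal p -> p a -> p b -> c = a + b -> p c.
Proof. by move=> [[_ [H _]] _] pa pb ->; apply: H. Qed.

Lemma pP p a b : prime_ideal p -> p (a * b) -> p a \/ p b.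
Proof. by move=> [_ [_ H]]; apply: H. Qed.

Lemma p1 p : prime_ideal p -> ~ p 1.
Proof. by move=> [_ [H _]]. Qed.

Lemma p0 p : prime_ideal p -> p 0.
Proof. by move=> [[H _] _]. Qed.

Definition A S r := exists t, S t /\ t * r = 0.

Lemma ann_iff S : Defs.multiplicative S -> forall r, locM_ann S r <-> A S r.
Proof.
move=> [S1 SM] r; split.
- move=> /(_ (1,1) S1) [t [St Ht]]; exists t; split=> //.
  by rewrite -[RHS]Ht /=; ring.
- move=> [t [St Ht]] x _; exists t; split=> //=.
  have -> : t * (r * x.1 * 1 - 0 * x.2) = (t * r) * x.1 by ring.
  by rewrite Ht mul0r.
Qed.

Lemma prime_ext p q : (forall x, p x <-> q x) -> prime_ideal p -> prime_ideal q.
Proof.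
move=> E [[H0 [HD HM]] [H1 HP]]; split; [split; [|split]|split].
- by apply/E.
- by move=> a b /E ? /E ?; apply/E; auto.
- by move=> r a /E ?; apply/E; auto.
- by move=> /E.
- by move=> a b /E /HP [] ?; [left|right]; apply/E.
Qed.

Lemma A_ideal S : Defs.multiplicative S -> is_ideal (A S).
Proof.
move=> [S1 SM]; split; [|split].
- by exists 1; split=> //; rewrite mulr0.
- move=> a b [t [St Ht]] [u [Su Hu]]; exists (t * u); split; first by apply: SM.
  have -> : t * u * (a + b) = (t * a) * u + (u * b) * t by ring.
  by rewrite Ht Hu !mul0r addr0.
- move=> r a [t [St Ht]]; exists t; split=> //.
  have -> : t * (r * a) = (t * a) * r by ring.
  by rewrite Ht mul0r.
Qed.

Lemma feq0 S x : frac_eq S x (@frac0 R) <-> exists t, S t /\ t * x.1 = 0.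
Proof.
split=> [[t [St Ht]]|[t [St Ht]]]; exists t; split=> //; rewrite -[RHS]Ht /=; ring.
Qed.

Definition K p (z w : R * R) := p (z.1 * w.2 - w.1 * z.2).

Lemma kappa_to p z w : prime_ideal p -> kappa_eq p z w -> K p z w.
Proof.
move=> pp [a [t [pa [npt [u [npu Hu]]]]]].
rewrite /K.
have H : p (u * t * (z.1 * w.2 - w.1 * z.2)).
  apply: (pI (u * (z.2 * w.2)) pp pa).
  have E : u * t * (z.1 * w.2 - w.1 * z.2) - u * (z.2 * w.2) * a =
    u * ((z.1 * w.2 + - w.1 * z.2, z.2 * w.2).1 * t - a * (z.1 * w.2 + - w.1 * z.2, z.2 * w.2).2) by rewrite /=; ring.
  by move: E; rewrite Hu => /eqP; rewrite subr_eq0 => /eqP.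
case: (pP pp H) => // /(pP pp) [] //.
Qed.

Lemma kappa_of p z w : prime_ideal p -> ~ p z.2 -> ~ p w.2 -> K p z w -> kappa_eq p z w.
Proof.
move=> pp nz nw Hk; exists (z.1 * w.2 - w.1 * z.2), (z.2 * w.2); split=> //.
split; first by move/(pP pp) => [].
exists 1; split; first exact: p1.
rewrite /=; ring.
Qed.

Lemma K_sym p z w : prime_ideal p -> K p z w -> K p w z.
Proof. move=> pp H; apply: (pI (-1) pp H); rewrite /=; ring. Qed.

Lemma K_trans' p z w v : prime_ideal p -> ~ p w.2 -> K p z w -> K p w v -> K p z v.
Proof.
move=> pp nw H1 H2.
have H : p (w.2 * (z.1 * v.2 - v.1 * z.2)).
  apply: (pD pp (pI _ pp H1 (erefl (v.2 * _))) (pI _ pp H2 (erefl (z.2 * _)))); ring.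
by case: (pP pp H).
Qed.
Definition K_trans p z w v := @K_trans' p z w v.
Arguments K_trans {p z} w {v}.

End Aux.

Lemma main (R : comNzRingType) (S : R -> Prop) :
  noetherian_ring R -> local_ring R -> Defs.multiplicative S ->
  (locM_prime S <-> prime_ideal (locM_ann S)) /\
  (prime_ideal (locM_ann S) <-> loc_idomain S) /\
  (loc_idomain S <->
     exists p : R -> Prop, prime_ideal p /\ locM_nonzero S /\
       exists f : R * R -> R * R, loc_mono_to_kappa S p f).
Proof.
move=> _ _ mS; have [S1 SM] := mS.
have AE : forall x, A S x <-> locM_ann S x by move=> x; apply: iff_sym; apply: (ann_iff mS).
have EA : forall x, locM_ann S x <-> A S x by move=> x; apply: (ann_iff mS).
have H12 : locM_prime S -> prime_ideal (A S).
  move=> [[x [Sx nx]] Hr]; split; first exact: A_ideal.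
  split.
  - move=> [t [St Ht]]; apply: nx; apply/feq0; exists t; split=> //.
    by move: Ht; rewrite mulr1 => ->; rewrite mul0r.
  - move=> a b [t [St Ht]]; case: (Hr a) => [Hz|Hi].
    + left; have /feq0 [u [Su Hu]] := Hz (1, 1) S1.
      by exists u; split=> //; rewrite -Hu /= mulr1.
    + right; have : frac_eq S (b, 1) (0, 1).
        apply: Hi => //; exists t; split=> //=.
        rewrite -[RHS]Ht; ring.
      move=> [u [Su Hu]]; exists u; split=> //; rewrite -[RHS]Hu /=; ring.
have H21 : prime_ideal (A S) -> locM_prime S.
  move=> pA; split.
  - exists (1, 1); split=> //; move/feq0 => [t [St Ht]]; apply: (p1 pA).
    by exists t; split.
  - move=> r; case: (classic (A S r)) => [[t [St Ht]]|nr].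
    + left=> x Sx; apply/feq0; exists t; split=> //=.
      by rewrite mulrA Ht mul0r.
    + right=> x y Sx Sy [t [St Ht]].
      have H : A S (r * (t * (x.1 * y.2 - y.1 * x.2))).
        exists 1; split=> //; rewrite -[RHS]Ht /=; ring.
      case: (pP pA H) => // [[u [Su Hu]]].
      exists (u * t); split; first by apply: SM.
      by rewrite -mulrA.
have H23 : prime_ideal (A S) -> loc_idomain S.
  move=> pA; split.
  - move/feq0 => [t [St Ht]]; apply: (p1 pA); by exists t.
  - move=> x y Sx Sy /feq0 [t [St Ht]].
    have H : A S (x.1 * y.1) by exists t.
    by case: (pP pA H) => [[u [Su Hu]]|[u [Su Hu]]]; [left|right]; apply/feq0;
      exists u.
have H32 : loc_idomain S -> prime_ideal (A S).
  move=> [n1 Hd]; split; first exact: A_ideal.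
  split.
  - move=> [t [St Ht]]; apply: n1; apply/feq0; by exists t.
  - move=> a b [t [St Ht]].
    have : frac_eq S (frac_mul (a, 1) (b, 1)) (frac0 R).
      by apply/feq0; exists t.
    by move/Hd => /(_ S1 S1) [] /feq0 [u [Su Hu]]; [left|right]; exists u.
have EP : prime_ideal (locM_ann S) <-> prime_ideal (A S).
  by split; apply: prime_ext.
split; first by rewrite EP; split.
split; first by rewrite EP; split.
split.
- move=> Hd; have pA := H32 Hd; have [n1 _] := Hd.
  have nS : forall s, S s -> ~ A S s.
    move=> s Ss [u [Su Hu]]; apply: n1; apply/feq0; exists (u * s).
    by split; [apply: SM|rewrite Hu mulr1].
  exists (A S); split=> //; split.
    by exists (1, 1); split.
  exists id; split; [|split; [|split; [|split]]].
  + by move=> x Sx; apply: nS.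
  + move=> x y Sx Sy [t [St Ht]]; apply: kappa_of => //; try exact: nS.
    by exists t.
  + move=> x y Sx Sy; apply: kappa_of => //=; try (apply: nS; apply: SM => //).
    rewrite /K /= subrr; exact: p0 pA.
  + move=> r x Sx; apply: kappa_of => //=; try exact: nS.
    rewrite /K /= subrr; exact: p0 pA.
  + move=> x y Sx Sy /(kappa_to pA) [t [St Ht]]; by exists t.
- move=> [p [pp [nz [f [Hden [Hc [Ha [Hs Hi]]]]]]]].
  apply: H23; apply: H12; split=> // r.
  have Kf : forall x y, isfrac S x -> isfrac S y -> K p (f x) (f y) ->
      frac_eq S x y.
    move=> x y Sx Sy Hk; apply: Hi => //; apply: kappa_of => //; exact: Hden.
  have Hs' : forall r x, isfrac S x -> K p (f (frac_scale r x)) (frac_scale r (f x)).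
    by move=> r' x Sx; apply: kappa_to => //; apply: Hs.
  case: (classic (p r)) => [pr|npr].
  + left=> x Sx.
    have H1 : K p (f (frac_scale r x)) (f (frac_scale 0 x)).
      apply: (@K_trans' _ p _ (frac_scale r (f x)) _ pp); first exact: Hden.
        exact: Hs'.
      apply: (@K_trans' _ p _ (frac_scale 0 (f x)) _ pp); first exact: Hden.
        rewrite /K /=; apply: (@pI _ p r ((f x).1 * (f x).2) _ pp pr); rewrite /=; ring.
      by apply: K_sym => //; apply: Hs'.
    move: (Kf (frac_scale r x) (frac_scale 0 x) Sx Sx H1) => [t [St Ht]]; apply/feq0.
    exists (t * x.2); split; first by apply: SM.
    rewrite -[RHS]Ht /=; ring.
  + right=> x y Sx Sy Hxy.
    have H1 : K p (frac_scale r (f x)) (frac_scale r (f y)).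
      apply: (@K_trans' _ p _ (f (frac_scale r x)) _ pp); first exact: Hden.
        by apply: K_sym => //; apply: Hs'.
      apply: (@K_trans' _ p _ (f (frac_scale r y)) _ pp); first exact: Hden.
        by apply: kappa_to => //; apply: Hc.
      exact: Hs'.
    apply: Kf => //.
    have H2 : p (r * ((f x).1 * (f y).2 - (f y).1 * (f x).2)).
      move: H1; rewrite /K /= => H1; apply: (@pI _ p _ 1 _ pp H1); rewrite /=; ring.
    by case: (pP pp H2).
Qed.

End Helpers.

Theorem lemma1p6 (R : comNzRingType) (S : R -> Prop) :
  noetherian_ring R -> local_ring R -> multiplicative S ->
  (locM_prime S <-> prime_ideal (locM_ann S)) /\
  (prime_ideal (locM_ann S) <-> loc_idomain S) /\
  (loc_idomain S <->
     exists p : R -> Prop, prime_ideal p /\ locM_nonzero S /\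
       exists f : R * R -> R * R, loc_mono_to_kappa S p f).
Proof. exact: Helpers.main. Qed.
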